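(* Let $q$ be a prime power, let $\mathbf{C}\subseteq\mathbf{F}_q^n$ be a projective linear $[n,k]_q$ code with maximum weight $w$, and let $h$ be a positive integer with $h>\log_q w-k+2$. Let $\mathbf{C}_1$ be the simplex complementary code of $\mathbf{C}$ of dimension $k+h$, which is a $[\frac{q^{k+h}-1}{q-1}-n,\ k+h,\ q^{k+h-1}-w]_q$ code with maximum weight $q^{k+h-1}$, and set $n'=\lceil\frac{q(q^{k+h-1}-w)}{q-1}\rceil-q^{k+h-1}$. Then the code $\mathbf{C}'$ obtained from $\mathbf{C}_1$ by the extension construction is a minimal linear code with parameters $[\frac{q^{k+h}-1}{q-1}-n+n',\ k+h,\ q^{k+h-1}-w]_q$ and maximum weight $q^{k+h-1}+n'$, and it violates the Ashikhmin–Barg condition.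
   Context: Projective code: the columns of a generator matrix are nonzero and pairwise linearly independent. Simplex complementary code of dimension $K=k+h$: append $h$ zeros to the columns $\mathbf{g}_1,\dots,\mathbf{g}_n$ of a generator matrix of $\mathbf{C}$, choose a set $P$ of representatives of all one-dimensional subspaces of $\mathbf{F}_q^K$ containing these vectors, and take the code generated by the matrix whose columns are $P\setminus\{\mathbf{g}_1,\dots,\mathbf{g}_n\}$. Extension construction: for a linear $[N,K]_q$ code $\mathbf{D}$ with $K\ge 2$, minimum weight $w_{min}$, maximum weight $w_{max}$ and $n'=\lceil\frac{qw_{min}}{q-1}\rceil-w_{max}\ge 1$, choose a basis $\mathbf{r}_1,\dots,\mathbf{r}_K$ of $\mathbf{D}$ with $wt(\mathbf{r}_1)=w_{max}$, $wt(\mathbf{r}_2)=w_{min}$, and $\mathbf{a}\in(\mathbf{F}_q^* )^{n'}$; the extended code is generated by $(\mathbf{a},\mathbf{r}_1),(\mathbf{0},\mathbf{r}_2),\dots,(\mathbf{0},\mathbf{r}_K)$ in $\mathbf{F}_q^{n'+N}$. A code is minimal if any two nonzero codewords with nested supports are scalar multiples of each other. Ashikhmin–Barg condition: $w_{min}/w_{max}>(q-1)/q$. *)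

(* Defs.v *)
(* Linear codes over a finite field F, given by generator
   matrices; the code generated by G : 'M[F]_(m, n) is the row space of G. *)
From HB Require Import structures.
From mathcomp Require Import all_boot all_order all_algebra all_field.
Set Implicit Arguments. Unset Strict Implicit. Unset Printing Implicit Defensive.
Import Order.TTheory GRing.Theory Num.Theory.
Local Open Scope ring_scope.

Section Codes.
Variable F : finFieldType.

Definition supp n (c : 'rV[F]_n) : {set 'I_n} := [set i | c 0 i != 0].
Definition wt n (c : 'rV[F]_n) : nat := #|supp c|.

Definition incode m n (G : 'M[F]_(m, n)) (c : 'rV[F]_n) : bool := (c <= G)%MS.

Definition maxwt m n (G : 'M[F]_(m, n)) : nat :=
  \max_(c : 'rV[F]_n | incode G c) wt c.

Definition minwt m n (G : 'M[F]_(m, n)) : nat :=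
  \big[minn/n]_(c : 'rV[F]_n | incode G c && (c != 0)) wt c.

Definition projective m n (G : 'M[F]_(m, n)) : Prop :=
  (forall i : 'I_n, col i G != 0) /\
  (forall i j : 'I_n, i != j -> \rank (row_mx (col i G) (col j G)) = 2%N).

Definition minimal_code m n (G : 'M[F]_(m, n)) : Prop :=
  forall c c' : 'rV[F]_n, incode G c -> incode G c' -> c != 0 -> c' != 0 ->
    supp c \subset supp c' -> exists a : F, c = a *: c'.

Definition AB_condition m n (G : 'M[F]_(m, n)) : Prop :=
  ((#|F| - 1)%N%:R / (#|F|)%:R : rat) < (minwt G)%:R / (maxwt G)%:R.

Definition pad k h (v : 'cV[F]_k) : 'cV[F]_(k + h) := col_mx v 0.

Definition proj_reps K (P : {set 'cV[F]_K}) : Prop :=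
  (forall p, p \in P -> p != 0) /\
  (forall v : 'cV[F]_K, v != 0 ->
     #|[set p in P | [exists a : F, v == a *: p]]| = 1%N).

Definition ext_block K nn (i1 : 'I_K) (a : 'rV[F]_nn) : 'M[F]_(K, nn) :=
  \matrix_(i, j) (if i == i1 then a 0 j else 0).

End Codes.

Definition ceil_div (a b : nat) : nat := ((a + b - 1) %/ b)%N.

(* Main.v *)
Require Import Defs.
From HB Require Import structures.
From mathcomp Require Import all_boot all_order all_algebra all_field zify.
Import Order.TTheory GRing.Theory Num.Theory.
Local Open Scope ring_scope.

Set Implicit Arguments. Unset Strict Implicit. Unset Printing Implicit Defensive.

Section Arith.
Local Open Scope nat_scope.
Lemma A1 (q T w : nat) : 1 < q -> w < T -> q * T < ceil_div (q * (q * T - w)) (q - 1).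
Proof.
move=> Hq Hw; rewrite /ceil_div leq_divRL; last lia.
have -> : q * (q * T - w) = q * q * T - q * w by rewrite mulnBr mulnA.
nia.
Qed.
Lemma A2 (q L : nat) : 1 < q -> q * L <= ceil_div (q * L) (q - 1) * (q - 1).
Proof.
move=> Hq; rewrite /ceil_div.
have := ltn_ceil (q * L + (q - 1) - 1) (_ : 0 < q - 1).
set c := (_ %/ _); rewrite mulSn; lia.
Qed.
Lemma A3 (q T w : nat) : 1 < q -> w < T -> ~ (q * (q * T - w) <= (q - 1) * (q * T)).
Proof.
move=> Hq Hw.
have -> : q * (q * T - w) = q * q * T - q * w by rewrite mulnBr mulnA.
nia.
Qed.

End Arith.

Section Helpers.
Variable F : finFieldType.

Lemma card_setE (T : finType) (P : pred T) : #|[set i | P i]| = (\sum_i (P i : nat))%N.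
Proof.
rewrite -sum1_card big_mkcond /=; apply: eq_bigr => i _; rewrite inE; by case: (P i).
Qed.

Lemma wt_sum n (c : 'rV[F]_n) : wt c = (\sum_j (c 0%R j != 0%R : nat))%N.
Proof. by rewrite /wt /supp card_setE. Qed.

Lemma wt_row_mx n1 n2 (u : 'rV[F]_n1) (v : 'rV[F]_n2) : wt (row_mx u v) = (wt u + wt v)%N.
Proof.
rewrite !wt_sum big_split_ord /=; congr (_ + _)%N; apply: eq_bigr => j _;
by rewrite ?row_mxEl ?row_mxEr.
Qed.

Lemma wt_le n (c : 'rV[F]_n) : (wt c <= n)%N.
Proof. by rewrite /wt (leq_trans (max_card _)) // card_ord. Qed.

Lemma wt0 n : wt (0 : 'rV[F]_n) = 0%N.
Proof. by rewrite wt_sum big1 // => j _; rewrite mxE eqxx. Qed.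

Lemma wt_scale_full n (l : F) (a : 'rV[F]_n) : (forall j, a 0 j != 0) ->
  wt (l *: a) = ((l != 0%R) * n)%N.
Proof.
move=> Ha; rewrite wt_sum.
have -> : (\sum_j (((l *: a) 0%R j) != 0%R : nat) = \sum_(j < n) (l != 0%R : nat))%N.
  by apply: eq_bigr => j _; rewrite mxE mulf_eq0 negb_or (negbTE (Ha j)) andbT.
by rewrite sum_nat_const card_ord mulnC.
Qed.

Lemma wt_eq0 n (c : 'rV[F]_n) : (wt c == 0%N) = (c == 0).
Proof.
apply/idP/idP => [|/eqP->]; last by rewrite wt0.
rewrite /wt cards_eq0 => /eqP H; apply/eqP/rowP => j; rewrite mxE.
apply/eqP; apply: contraT => Hj.
have : j \in supp c by rewrite inE.
by rewrite H inE.
Qed.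

Lemma incodeP m n (G : 'M[F]_(m, n)) c : reflect (exists x, c = x *m G) (incode G c).
Proof. exact: submxP. Qed.

Lemma incodeM m n (G : 'M[F]_(m, n)) x : incode G (x *m G).
Proof. exact: submxMl. Qed.

Lemma maxwt_ub m n (G : 'M[F]_(m, n)) c : incode G c -> (wt c <= maxwt G)%N.
Proof. by move=> H; rewrite /maxwt; apply: leq_bigmax_cond. Qed.

Lemma maxwt_le m n (G : 'M[F]_(m, n)) M : (forall c, incode G c -> (wt c <= M)%N) ->
  (maxwt G <= M)%N.
Proof. by move=> H; apply/bigmax_leqP. Qed.

Lemma maxwt_ex m n (G : 'M[F]_(m, n)) : exists x, wt (x *m G) = maxwt G.
Proof.
have : (0 < #|[pred c : 'rV[F]_n | incode G c]|)%N.
  by apply/card_gt0P; exists 0; rewrite inE /incode sub0mx.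
move=> /(eq_bigmax_cond (fun c => wt c)) [c Hc Heq].
move: Hc; rewrite inE => /incodeP [x Hx]; exists x.
by rewrite /maxwt -Hx -Heq.
Qed.

Lemma bigmin_le_seq (I : eqType) (r : seq I) (P : pred I) (f : I -> nat) (d : nat) x :
  x \in r -> P x -> (\big[minn/d]_(i <- r | P i) f i <= f x)%N.
Proof.
elim: r => [//|y r IH]; rewrite inE big_cons => /orP [/eqP<- -> | Hr Px].
  exact: geq_minl.
case: (P y); last exact: IH.
by rewrite (leq_trans (geq_minr _ _)) ?IH.
Qed.

Lemma minwt_le m n (G : 'M[F]_(m, n)) c : incode G c -> c != 0 -> (minwt G <= wt c)%N.
Proof.
move=> H1 H2; rewrite /minwt; apply: bigmin_le_seq; first by rewrite mem_index_enum.
by rewrite H1 H2.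
Qed.

Lemma minwt_ge m n (G : 'M[F]_(m, n)) L : (L <= n)%N ->
  (forall c, incode G c -> c != 0 -> (L <= wt c)%N) -> (L <= minwt G)%N.
Proof.
move=> Hn H; rewrite /minwt; apply: (big_ind (fun x => L <= x)%N) => //.
  by move=> x y Hx Hy; rewrite leq_min Hx Hy.
by move=> c /andP [H1 H2]; apply: H.
Qed.

End Helpers.

Section Count.
Variable F : finFieldType.
Variable K : nat.
Local Notation q := #|F|.

Definition fx (x : 'rV[F]_K) (v : 'cV[F]_K) : F := (x *m v) 0 0.

Lemma fxD x v w : fx x (v + w) = fx x v + fx x w.
Proof. by rewrite /fx mulmxDr mxE. Qed.

Lemma fxZ x a v : fx x (a *: v) = a * fx x v.
Proof. by rewrite /fx -scalemxAr mxE. Qed.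

Lemma ker_card (x : 'rV[F]_K) : x != 0 ->
  (#|[set v : 'cV[F]_K | fx x v == 0%R]| * q = q ^ K)%N.
Proof.
move=> xn0.
have [j xj] : exists j, x 0 j != 0.
  apply/existsP; apply: contraR xn0 => /existsPn H; apply/eqP/rowP => i.
  rewrite mxE; exact/eqP/negbNE/H.
pose e : 'cV[F]_K := (x 0 j)^-1 *: delta_mx j 0.
have fe : fx x e = 1.
  by rewrite fxZ /fx -colE mxE mulVf.
have fib c : #|[set v | fx x v == c]| = #|[set v | fx x v == 0]|.
  have -> : [set v | fx x v == c] = [set v + c *: e | v in [set v | fx x v == 0]].
    apply/setP => v; rewrite inE; apply/idP/imsetP => [/eqP Hv | [u Hu ->]].
      exists (v - c *: e); last by rewrite subrK.
      by rewrite inE -scaleNr fxD fxZ fe Hv mulr1 subrr.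
    by move: Hu; rewrite inE fxD fxZ fe mulr1 => /eqP ->; rewrite add0r.
  by rewrite card_imset //; exact: addIr.
have -> : (q ^ K)%N = #|{: 'cV[F]_K}| by rewrite card_mx muln1.
rewrite -[in RHS]sum1_card (partition_big (fx x) predT) //=.
rewrite (eq_bigr (fun _ => #|[set v | fx x v == 0]|)).
  by rewrite sum_nat_const mulnC.
move=> c _; rewrite -(fib c) -sum1_card; apply: eq_bigl => v; by rewrite inE.
Qed.


Lemma rep_uniq (P : {set 'cV[F]_K}) (HP : proj_reps P) p p' a :
  p \in P -> p' \in P -> p' = a *: p -> p' = p.
Proof.
move=> Pp Pp' E; have p'n0 := HP.1 _ Pp'.
have /eqP/cards1P [r Hr] := HP.2 _ p'n0.
have H1 : p' \in [set r0 in P | [exists b, p' == b *: r0]].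
  by rewrite inE Pp'; apply/existsP; exists 1; rewrite scale1r.
have H2 : p \in [set r0 in P | [exists b, p' == b *: r0]].
  by rewrite inE Pp; apply/existsP; exists a; rewrite E.
by move: H1 H2; rewrite Hr !inE => /eqP -> /eqP ->.
Qed.

Lemma card_reps (P : {set 'cV[F]_K}) (HP : proj_reps P) (S : pred 'cV[F]_K)
  (HS : forall a v, a != 0 -> S (a *: v) = S v) :
  (#|[set p in P | S p]| * (q - 1))%N = #|[set v | (v != 0) && S v]|.
Proof.
set A := [set p in P | S p].
have -> : (q - 1)%N = #|[set~ (0:F)]| by rewrite cardsC1 subn1.
rewrite mulnC -cardsX.
pose g (u : F * 'cV[F]_K) := u.1 *: u.2.
have -> : [set v | (v != 0) && S v] = [set g u | u in setX [set~ 0] A].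
  apply/setP => v; rewrite inE; apply/idP/imsetP.
  - case/andP => vn0 Sv; have /eqP/cards1P [r Hr] := HP.2 _ vn0.
    have : r \in [set r0 in P | [exists b, v == b *: r0]] by rewrite Hr set11.
    rewrite inE => /andP [Pr /existsP [b /eqP vb]].
    have bn0 : b != 0 by apply: contra vn0; rewrite vb => /eqP->; rewrite scale0r.
    exists (b, r); last by rewrite /g vb.
    by rewrite in_setX !inE /= bn0 Pr /= -(HS b) // -vb.
  - case=> [[b r]]; rewrite in_setX !inE /= => /andP [bn0 /andP [Pr Sr]] ->.
    by rewrite /g /= scaler_eq0 negb_or bn0 (HP.1 _ Pr) HS.
rewrite card_in_imset //.
move=> [b r] [b' r']; rewrite !in_setX !inE /=.
move=> /andP [bn0 /andP [Pr _]] /andP [bn0' /andP [Pr' _]]; rewrite /g /= => E.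
have rr : r' = r.
  apply: (rep_uniq HP Pr Pr' (a := b'^-1 * b)).
  by rewrite -scalerA E scalerA mulVf ?scale1r.
subst r'; congr pair.
by move/eqP: E; rewrite -subr_eq0 -scalerBl scaler_eq0 (negbTE (HP.1 _ Pr)) orbF subr_eq0 => /eqP.
Qed.


Lemma q_gt1 : (1 < q)%N.
Proof. exact: finNzRing_gt1. Qed.

Lemma card_hyp_out (P : {set 'cV[F]_K}) (HP : proj_reps P) (x : 'rV[F]_K) :
  x != 0 -> #|[set p in P | fx x p != 0]| = (q ^ K.-1)%N.
Proof.
move=> xn0.
have Kgt0 : (0 < K)%N.
  by case: K x xn0 => // x; rewrite (thinmx0 x) eqxx.
have Hq := q_gt1.
have Hker := ker_card xn0.
have Hk : #|[set v : 'cV[F]_K | fx x v == 0]| = (q ^ K.-1)%N.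
  apply/eqP; rewrite -(eqn_pmul2r (ltnW Hq)) Hker -expnSr prednK //.
have Hc := card_reps HP (S := fun v => fx x v != 0).
rewrite /= in Hc.
have HS : forall a v, a != 0 -> (fx x (a *: v) != 0) = (fx x v != 0).
  by move=> a v an0; rewrite fxZ mulf_eq0 negb_or an0.
have {Hc} Hc := Hc HS.
have E : [set v | (v != 0) && (fx x v != 0)] = ~: [set v : 'cV[F]_K | fx x v == 0].
  apply/setP => v; rewrite !inE andb_idl //; apply: contraNN => /eqP ->.
  by rewrite /fx mulmx0 mxE.
rewrite E in Hc.
have Hcc := cardsC [set v : 'cV[F]_K | fx x v == 0].
rewrite Hk card_mx muln1 in Hcc.
apply/eqP; rewrite -(@eqn_pmul2r (q - 1)) ?subn_gt0 //; apply/eqP; rewrite Hc.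
by rewrite mulnBr muln1 -expnSr prednK // -Hcc addKn.
Qed.

End Count.

Section Simplex.
Variable F : finFieldType.
Local Notation q := #|F|.

Lemma mul_entry m n (y : 'rV[F]_m) (M : 'M[F]_(m, n)) j :
  (y *m M) 0 j = (y *m col j M) 0 0.
Proof. by rewrite !mxE; apply: eq_bigr => i _; rewrite !mxE. Qed.

Lemma proj_col_inj m n (G : 'M[F]_(m, n)) : projective G -> injective (fun i => col i G).
Proof.
case=> _ H i j /= E; apply/eqP; apply: contraT => ij.
have := H i j ij; rewrite E.
have : (\rank (row_mx (col j G) (col j G)) <= 1)%N.
  rewrite -[X in row_mx X X]mulmx1 -mul_mx_row.
  exact: leq_trans (mxrankM_maxl _ _) (rank_leq_col _).
by move=> /[swap] ->.
Qed.

Lemma pad_inj k h : injective (@pad F k h).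
Proof. by move=> u v; rewrite /pad => /eq_col_mx []. Qed.

Lemma fx_pad k h (x : 'rV[F]_(k + h)) v : fx x (pad h v) = (lsubmx x *m v) 0 0.
Proof.
by rewrite /fx /pad -{1}(hsubmxK x) mul_row_col mulmx0 addr0.
Qed.

Variables (n k h : nat) (G : 'M[F]_(k, n)) (Hproj : projective G)
  (P : {set 'cV[F]_(k + h)}) (HP : proj_reps P)
  (HPg : forall i : 'I_n, pad h (col i G) \in P)
  (N : nat) (G1 : 'M[F]_(k + h, N))
  (HG1inj : injective (fun j : 'I_N => col j G1))
  (HG1cols : [set col j G1 | j : 'I_N] = P :\: [set pad h (col i G) | i : 'I_n]).

Lemma wtG1 (x : 'rV[F]_(k + h)) : x != 0 ->
  (wt (x *m G1) + wt (lsubmx x *m G) = q ^ (k + h).-1)%N.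
Proof.
move=> xn0.
set B := [set pad h (col i G) | i : 'I_n].
set A := [set p in P | fx x p != 0].
rewrite -(card_hyp_out HP xn0) -/A -(cardsID B A) [in RHS]addnC.
congr (_ + _)%N.
  have -> : A :\: B = [set col j G1 | j in [set j | fx x (col j G1) != 0]].
    apply/setP => p; apply/idP/imsetP.
    - rewrite !inE => /andP [pB /andP [pP fp]].
      have : p \in P :\: B by rewrite inE pB pP.
      rewrite -HG1cols => /imsetP [j _ pj]; exists j => //.
      by rewrite inE -pj.
    - move=> [j]; rewrite inE => fj ->.
      have : col j G1 \in P :\: B by rewrite -HG1cols; apply: imset_f.
      by rewrite !inE fj andbT.
  rewrite card_imset // /wt /supp; apply: eq_card => j; rewrite !inE.
  by rewrite mul_entry.
have -> : A :&: B = [set pad h (col i G) | i in [set i | fx x (pad h (col i G)) != 0]].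
  apply/setP => p; apply/idP/imsetP.
  - rewrite !inE => /andP [/andP [pP fp] /imsetP [i _ pi]]; exists i => //.
    by rewrite inE -pi.
  - move=> [i]; rewrite inE => fi ->.
    by rewrite !inE HPg fi /=; apply/imsetP; exists i.
rewrite (@card_imset _ _ (fun i => pad h (col i G))); last first.
  by move=> i j /pad_inj; apply: (proj_col_inj Hproj).
rewrite /wt /supp; apply: eq_card => i; rewrite !inE.
by rewrite fx_pad (mul_entry (lsubmx x) G i).
Qed.

End Simplex.

Section More.
Variable F : finFieldType.
Local Notation q := #|F|.

Lemma ext_mul K nn (i1 : 'I_K) (a : 'rV[F]_nn) (x : 'rV[F]_K) :
  x *m ext_block i1 a = x 0 i1 *: a.
Proof.
apply/rowP => j; rewrite !mxE (bigD1 i1) //= big1 => [|i ii1].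
  by rewrite !mxE eqxx addr0.
by rewrite !mxE (negbTE ii1) mulr0.
Qed.

Lemma sum_wt n (u v : 'rV[F]_n) : supp u \subset supp v ->
  (\sum_(mu : F) wt (u - mu *: v)%R = (q - 1) * wt v)%N.
Proof.
move=> /subsetP Hs.
rewrite (eq_bigr (fun mu : F => (\sum_j (((u - mu *: v) 0 j)%R != 0%R : nat))%N)). 2:{ move=> mu _. rewrite wt_sum. done. }
rewrite exchange_big wt_sum big_distrr /=; apply: eq_big => // j _.
case: (eqVneq (v 0 j) 0) => vj.
  have uj : u 0 j = 0.
    apply/eqP; apply: contraT => uj.
    have : j \in supp v by apply: Hs; rewrite inE.
    by rewrite inE vj eqxx.
  by rewrite muln0 big1 // => mu _; rewrite !mxE uj vj mulr0 subrr eqxx.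
rewrite muln1.
have -> : (\sum_(mu : F) (((u - mu *: v) 0 j)%R != 0%R : nat))%N = #|[set~ u 0 j / v 0 j]|.
  rewrite -sum1_card [in RHS]big_mkcond /=; apply: eq_bigr => mu _.
  rewrite !inE !mxE subr_eq0.
  have -> : (u 0 j == mu * v 0 j) = (mu == u 0 j / v 0 j).
    apply/eqP/eqP => [->|->]; first by rewrite mulfK.
    by rewrite mulfVK.
  by case: (mu == _).
by rewrite cardsC1 subn1.
Qed.

End More.

Unset Implicit Arguments.

Theorem corollary3p1
  (F : finFieldType) (n k h : nat)
  (* the projective [n,k]_q code C with generator matrix G and max weight w *)
  (G : 'M[F]_(k, n)) (w : nat)
  (Hk : (0 < k)%N) (HG : row_free G) (Hproj : projective G) (Hw : w = maxwt G)
  (Hh : (0 < h)%N)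
  (* h > log_q w - k + 2, i.e. q^(k+h-2) > w *)
  (Hhw : (w < #|F| ^ (k + h - 2))%N)
  (* simplex complementary code C1 of dimension k+h, generated by G1 *)
  (P : {set 'cV[F]_(k + h)}) (HP : proj_reps P)
  (HPg : forall i : 'I_n, pad h (col i G) \in P)
  (N : nat) (G1 : 'M[F]_(k + h, N))
  (HG1inj : injective (fun j : 'I_N => col j G1))
  (HG1cols : [set col j G1 | j : 'I_N] = P :\: [set pad h (col i G) | i : 'I_n])
  (* extension construction applied to C1 *)
  (R : 'M[F]_(k + h, N)) (HRfree : row_free R) (HRspan : (R == G1)%MS)
  (i1 i2 : 'I_(k + h)) (Hi12 : i1 != i2)
  (Hr1 : wt (row i1 R) = maxwt G1) (Hr2 : wt (row i2 R) = minwt G1)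
  (nn : nat)
  (Hnn : nn = (ceil_div (#|F| * minwt G1) (#|F| - 1) - maxwt G1)%N)
  (a : 'rV[F]_nn) (Ha : forall j, a 0 j != 0) :
  let q := #|F| in
  let K := (k + h)%N in
  let n' := (ceil_div (q * (q ^ (K - 1) - w)) (q - 1) - q ^ (K - 1))%N in
  let G' : 'M[F]_(K, nn + N) := row_mx (ext_block i1 a) R in
  (* C1 is a [(q^K-1)/(q-1) - n, K, q^(K-1) - w] code with max weight q^(K-1) *)
  [/\ N = ((q ^ K - 1) %/ (q - 1) - n)%N, \rank G1 = K,
      minwt G1 = (q ^ (K - 1) - w)%N & maxwt G1 = (q ^ (K - 1))%N] /\
  (* C' is a minimal [(q^K-1)/(q-1) - n + n', K, q^(K-1) - w] code with
     maximum weight q^(K-1) + n', violating the Ashikhmin--Barg condition *)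
  [/\ (0 < nn)%N /\ nn = n', (nn + N = (q ^ K - 1) %/ (q - 1) - n + n')%N,
      \rank G' = K,
      minwt G' = (q ^ (K - 1) - w)%N /\ maxwt G' = (q ^ (K - 1) + n')%N &
      minimal_code G' /\ ~ AB_condition G'].
Proof.
move=> q K n' G'.
have Hq : (1 < q)%N := q_gt1 F.
have HK : (2 <= K)%N by rewrite /K; lia.
have HQ : (q ^ (K - 1) = q * q ^ (K - 2))%N by rewrite -expnS; have -> : (K - 1 = (K - 2).+1)%N by lia.
set Q := (q ^ (K - 1))%N in HQ *.
have HQw : (w < Q)%N.
  rewrite HQ; apply: (leq_trans Hhw); rewrite leq_pmull //; lia.
have Hrel : forall x : 'rV[F]_K, x != 0 -> (wt (x *m G1) + wt (lsubmx x *m G) = Q)%N.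
  move=> x xn0; rewrite /Q subn1.
  exact: (wtG1 Hproj HP HPg HG1inj HG1cols xn0).
have HwG : forall y : 'rV[F]_k, (wt (y *m G) <= w)%N.
  by move=> y; rewrite Hw; apply: maxwt_ub; apply: incodeM.
have Hpos : forall x : 'rV[F]_K, x != 0 -> (Q - w <= wt (x *m G1))%N.
  by move=> x xn0; have := Hrel x xn0; have := HwG (lsubmx x); lia.
have HG1free : row_free G1.
  apply: inj_row_free => x Hx; apply/eqP; apply: contraT => xn0.
  by have := Hpos x xn0; rewrite Hx wt0; lia.
have rankG1 : \rank G1 = K by apply/eqP.
have [y yn0] : exists y : 'rV[F]_h, y != 0.
  exists (const_mx 1); apply/eqP => /rowP /(_ (Ordinal Hh)); rewrite !mxE.
  by apply/eqP; exact: oner_neq0.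
have Hrm : forall z : 'rV[F]_k, (row_mx z y : 'rV_K) != 0.
  move=> z; apply: contra yn0 => /eqP; rewrite -row_mx0 => /eq_row_mx [_ ->].
  by [].
have Hwx : forall z, wt (row_mx z y *m G1) = (Q - wt (z *m G))%N.
  by move=> z; have := Hrel _ (Hrm z); rewrite row_mxKl => <-; rewrite addnK.
have maxG1 : maxwt G1 = Q.
  apply/eqP; rewrite eqn_leq; apply/andP; split.
    apply: maxwt_le => c /incodeP [x ->].
    case: (eqVneq x 0) => [->|xn0]; first by rewrite mul0mx wt0.
    by rewrite -(Hrel x xn0) leq_addr.
  have := Hwx 0; rewrite mul0mx wt0 subn0 => <-.
  by apply: maxwt_ub; exact: incodeM.
have [x1 Hx1] := maxwt_ex G.
rewrite -Hw in Hx1.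
have HNQ : (Q <= N)%N.
  by have := wt_le (row_mx 0 y *m G1); rewrite Hwx mul0mx wt0 subn0.
have minG1 : minwt G1 = (Q - w)%N.
  apply/eqP; rewrite eqn_leq; apply/andP; split.
    rewrite -Hx1 -Hwx; apply: minwt_le; first exact: incodeM.
    by rewrite -wt_eq0 Hwx Hx1; lia.
  apply: minwt_ge; first lia.
  move=> c /incodeP [x ->] cn0.
  have xn0 : x != 0 by apply: contra cn0 => /eqP ->; rewrite mul0mx.
  exact: Hpos.
have cardP : (#|P| * (q - 1) = q ^ K - 1)%N.
  have := @card_reps F K P HP predT (fun _ _ _ => erefl).
  have -> : [set p in P | predT p] = P by apply/setP => p; rewrite !inE andbT.
  move=> ->.
  have -> : [set v : 'cV[F]_K | (v != 0) && predT v] = [set~ 0].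
    by apply/setP => v; rewrite !inE andbT.
  by rewrite cardsC1 card_mx muln1 subn1.
have cardB : #|[set pad h (col i G) | i : 'I_n]| = n.
  rewrite (@card_imset _ _ (fun i => pad h (col i G))); first by rewrite card_ord.
  by move=> i j /pad_inj; apply: (proj_col_inj Hproj).
have HN : N = ((q ^ K - 1) %/ (q - 1) - n)%N.
  rewrite -cardP mulnK; last lia.
  have : #|[set col j G1 | j : 'I_N]| = N.
    by rewrite (@card_imset _ _ (fun j => col j G1)) // card_ord.
  rewrite HG1cols cardsD (setIidPr _) ?cardB //.
  by apply/subsetP => p /imsetP [i _ ->]; exact: HPg.
have Hnn' : nn = n' by rewrite Hnn minG1 maxG1.
have Hceil : (Q < ceil_div (q * (Q - w)) (q - 1))%N.
  by rewrite HQ; apply: A1.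
have Hnnpos : (0 < nn)%N by rewrite Hnn minG1 maxG1 subn_gt0.
move/andP: HRspan => [HRG HGR].
have HRG1 : forall c, incode R c -> incode G1 c.
  by move=> c Hc; apply: submx_trans Hc HRG.
have wtG' : forall x : 'rV[F]_K, wt (x *m G') = ((x 0%R i1 != 0%R) * nn + wt (x *m R))%N.
  by move=> x; rewrite /G' mul_mx_row wt_row_mx ext_mul wt_scale_full.
have Rnz : forall x : 'rV[F]_K, x != 0 -> x *m R != 0.
  move=> x; apply: contra => /eqP E; apply/eqP; apply: (row_free_inj HRfree).
  by rewrite E mul0mx.
have wR_lo : forall x : 'rV[F]_K, x != 0 -> (Q - w <= wt (x *m R))%N.
  move=> x xn0; rewrite -minG1; apply: minwt_le; last exact: Rnz.
  by apply: HRG1; exact: incodeM.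
have wR_hi : forall x : 'rV[F]_K, (wt (x *m R) <= Q)%N.
  by move=> x; rewrite -maxG1; apply: maxwt_ub; apply: HRG1; exact: incodeM.
have rankG' : \rank G' = K.
  apply/eqP; rewrite eqn_leq rank_leq_row /=.
  have E : R = G' *m col_mx 0 1%:M by rewrite /G' mul_row_col mulmx0 add0r mulmx1.
  apply: leq_trans (mxrankM_maxl G' (col_mx 0 1%:M)).
  by rewrite -E (eqP HRfree).
have minG' : minwt G' = (Q - w)%N.
  apply/eqP; rewrite eqn_leq; apply/andP; split.
    have d2 : (delta_mx 0 i2 : 'rV[F]_K) 0 i1 = 0.
      by rewrite mxE eqxx /= (negbTE Hi12).
    have wt2 : wt (delta_mx 0 i2 *m G') = (Q - w)%N.
      by rewrite wtG' d2 eqxx mul0n add0n -rowE Hr2 minG1.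
    rewrite -wt2; apply: minwt_le; first exact: incodeM.
    by rewrite -wt_eq0 wt2 subn_eq0 -ltnNge.
  apply: minwt_ge; first by rewrite (leq_trans (leq_subr _ _)) // (leq_trans HNQ) // leq_addl.
  move=> c /incodeP [x ->] cn0.
  have xn0 : x != 0 by apply: contra cn0 => /eqP ->; rewrite mul0mx.
  by rewrite wtG' (leq_trans (wR_lo x xn0)) // leq_addl.
have maxG' : maxwt G' = (Q + nn)%N.
  apply/eqP; rewrite eqn_leq; apply/andP; split.
    apply: maxwt_le => c /incodeP [x ->]; rewrite wtG'.
    rewrite addnC leq_add ?wR_hi //.
    by case: (_ != _); rewrite ?mul1n ?mul0n.
  have d1 : (delta_mx 0 i1 : 'rV[F]_K) 0 i1 = 1 by rewrite mxE !eqxx.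
  have <- : wt (delta_mx 0 i1 *m G') = (Q + nn)%N.
    by rewrite wtG' d1 oner_neq0 mul1n -rowE Hr1 maxG1 addnC.
  by apply: maxwt_ub; exact: incodeM.
have minimal : minimal_code G'.
  move=> c c' /incodeP [x ->] /incodeP [yy ->] cn0 c'n0 Hsub.
  have xn0 : x != 0 by apply: contra cn0 => /eqP ->; rewrite mul0mx.
  have Hsuv : supp (x *m R) \subset supp (yy *m R).
    apply/subsetP => j; rewrite !inE => uj.
    have : rshift nn j \in supp (x *m G') by rewrite inE /G' mul_mx_row row_mxEr.
    by move/(subsetP Hsub); rewrite inE /G' mul_mx_row row_mxEr.
  have [mu Hmu] : exists mu, x = mu *: yy.
    case: (pickP (fun mu => x == mu *: yy)) => [mu /eqP Hmu | Hnone]; first by exists mu.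
    exfalso.
    have Hs := sum_wt Hsuv.
    have lb : forall mu : F, (Q - w <= wt (x *m R - mu *: (yy *m R)))%N.
      move=> mu; rewrite scalemxAl -mulmxBl; apply: wR_lo.
      by rewrite subr_eq0 Hnone.
    have : (q * (Q - w) <= (q - 1) * Q)%N.
      apply: (@leq_trans ((q - 1) * wt (yy *m R))); last by rewrite leq_mul2l wR_hi orbT.
      rewrite -Hs.
      have -> : (q * (Q - w) = \sum_(mu : F) (Q - w))%N.
        transitivity (\sum_(mu in F) (Q - w))%N; first by rewrite sum_nat_const.
        by apply: eq_bigl.
      by apply: leq_sum => mu _; apply: lb.
    by rewrite HQ; apply: A3.
  by exists mu; rewrite Hmu scalemxAl.
have notAB : ~ AB_condition G'.
  rewrite /AB_condition minG' maxG' => H.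
  have Hc2 : (Q + nn = ceil_div (q * (Q - w)) (q - 1))%N.
    by rewrite Hnn minG1 maxG1 subnKC // ltnW.
  have H2 := @A2 q (Q - w) Hq; rewrite -Hc2 in H2.
  have HQn : (0 < Q + nn)%N by rewrite addn_gt0 Hnnpos orbT.
  move: H; rewrite ltr_pdivlMr ?ltr0n // mulrAC ltr_pdivrMr ?ltr0n; last by apply: ltnW.
  rewrite -!natrM ltr_nat => H.
  by move: H; rewrite mulnC [X in (_ < X)%N]mulnC => /(leq_trans)/(_ H2); rewrite ltnn.
split; first by split.
have HnN : (nn + N = (q ^ K - 1) %/ (q - 1) - n + n')%N.
  by rewrite -Hnn' addnC -HN.
split.
- by split.
- exact: HnN.
- exact: rankG'.
- by split; rewrite ?minG' // maxG' Hnn'.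
- by split.
Qed.
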